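(* Let $h\in\mathbb R\setminus\{0\}$ and put $$\alpha:=1,\qquad \beta:=\frac{\frac h2\exp(-\frac{h^2}8)}{\sqrt{2\pi}\,(\Phi(\frac h2)-\frac12)}.$$ Then for all $x,y\in\mathbb R$ with $|x|<|y|$, $$\exp\Big(-\alpha\frac{y^2-x^2}2\Big)<\frac{\Phi(y+\frac h2)-\Phi(y-\frac h2)}{\Phi(x+\frac h2)-\Phi(x-\frac h2)}<\exp\Big(-\beta\frac{y^2-x^2}2\Big).$$ These constants are optimal: if $\alpha$ is replaced by any smaller constant, the left inequality fails for some $x,y$ with $|x|<|y|$, and if $\beta$ is replaced by any larger constant, the right inequality fails for some such $x,y$. Moreover, $$\beta>\exp\Big(-\frac{h^2}{12}-\frac{h^4}{1440}\Big)>1-\frac{h^2}{12}.$$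
   Context: $\Phi$ is the standard normal distribution function. *)

(* Defs.v *)
From Stdlib Require Import Reals.
From Coquelicot Require Import Coquelicot.
Open Scope R_scope.

Definition std_normal_pdf (t : R) : R := / sqrt (2 * PI) * exp (- t ^ 2 / 2).
Definition Phi (x : R) : R :=
  RInt_gen std_normal_pdf (Rbar_locally m_infty) (at_point x).

Definition Phi_ratio (h x y : R) : R :=
  (Phi (y + h / 2) - Phi (y - h / 2)) / (Phi (x + h / 2) - Phi (x - h / 2)).

Definition beta_const (h : R) : R :=
  (h / 2 * exp (- h ^ 2 / 8)) / (sqrt (2 * PI) * (Phi (h / 2) - 1 / 2)).

(* Main.v *)
Require Import Defs.
From Stdlib Require Import Reals Lra Psatz.
From Coquelicot Require Import Coquelicot.
Open Scope R_scope.

Lemma incr_strict (f f' : R -> R) (lo : R) :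
  (forall x, lo <= x -> is_derive f x (f' x)) -> (forall x, lo < x -> 0 < f' x) ->
  forall x y, lo <= x -> x < y -> f x < f y.
Proof.
intros Hd Hp x y Hx Hxy.
destruct (MVT_cor2 f f' x y Hxy) as [c [Hc1 Hc2]].
{ intros c0 Hc0; apply is_derive_Reals, Hd; lra. }
assert (0 < f' c) by (apply Hp; lra).
assert (0 < f' c * (y - x)) by (apply Rmult_lt_0_compat; lra). lra.
Qed.

Lemma deriv0_const (f : R -> R) :
  (forall x, is_derive f x 0) -> forall x, f x = f 0.
Proof.
intros Hd x.
destruct (Rtotal_order x 0) as [H|[H|H]].
- destruct (MVT_cor2 f (fun _ => 0) x 0 H) as [c [Hc1 Hc2]].
  { intros c0 _; apply is_derive_Reals, Hd. } lra.
- subst; reflexivity.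
- destruct (MVT_cor2 f (fun _ => 0) 0 x H) as [c [Hc1 Hc2]].
  { intros c0 _; apply is_derive_Reals, Hd. } lra.
Qed.

Lemma ex_RInt_all (f : R -> R) a b : (forall x, continuous f x) -> ex_RInt f a b.
Proof. intros H; apply (ex_RInt_continuous (V:=R_CompleteNormedModule)); intros; apply H. Qed.

Ltac contd := intros; apply (ex_derive_continuous (K:=R_AbsRing) (V:=R_NormedModule)); auto_derive; auto.

Ltac exp_unify := repeat match goal with |- context [exp ?a] => match goal with |- context [exp ?b] => assert_fails (constr_eq a b); replace (exp a) with (exp b) by (f_equal; field) end end.

Lemma scalR (a b : R) : scal a b = a * b. Proof. reflexivity. Qed.
Lemma plusR (a b : R) : plus a b = a + b. Proof. reflexivity. Qed.
Lemma minusR (a b : R) : minus a b = a - b. Proof. reflexivity. Qed.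
Lemma oppR (a : R) : opp a = - a. Proof. reflexivity. Qed.
Lemma zeroR : (zero : R) = 0. Proof. reflexivity. Qed.

Ltac req := match goal with |- ?a = ?b => change (@eq R a b) end.
Ltac rs := unfold scal, plus, opp, minus, mult, zero; cbn -[pow exp Rdiv Rinv sqrt ln atan PI RInt].

Section RI.
Variable f g : R -> R.
Lemma RInt_scalR a b k : ex_RInt f a b -> RInt (fun t => k * f t) a b = k * RInt f a b.
Proof. intros H; exact (RInt_scal f a b k H). Qed.
Lemma RInt_plusR a b : ex_RInt f a b -> ex_RInt g a b -> RInt (fun t => f t + g t) a b = RInt f a b + RInt g a b.
Proof. intros H1 H2; exact (RInt_plus f g a b H1 H2). Qed.
Lemma RInt_minusR a b : ex_RInt f a b -> ex_RInt g a b -> RInt (fun t => f t - g t) a b = RInt f a b - RInt g a b.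
Proof. intros H1 H2; exact (RInt_minus f g a b H1 H2). Qed.
Lemma RInt_constR a b c : RInt (fun _ => c) a b = (b - a) * c.
Proof. exact (RInt_const a b c). Qed.
Lemma RInt_comp_linR u v a b : ex_RInt f (u*a+v) (u*b+v) -> RInt (fun y => u * f (u*y+v)) a b = RInt f (u*a+v) (u*b+v).
Proof. intros H; exact (RInt_comp_lin f u v a b H). Qed.
Lemma RInt_ChaslesR a b c : ex_RInt f a b -> ex_RInt f b c -> RInt f a b + RInt f b c = RInt f a c.
Proof. intros H1 H2; exact (RInt_Chasles f a b c H1 H2). Qed.
Lemma RInt_swapR a b : ex_RInt f a b -> - RInt f a b = RInt f b a.
Proof. intros H; exact (opp_RInt_swap f a b H). Qed.
Lemma RInt_pointR a : RInt f a a = 0.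
Proof. exact (RInt_point a f). Qed.
End RI.

Definition w (t : R) := exp (- t ^ 2 / 2).
Definition P (u : R) : R := RInt w 0 u.

Lemma w_cont x : continuous w x.
Proof. unfold w; contd. Qed.

Lemma P_deriv x : is_derive P x (w x).
Proof.
apply (is_derive_RInt w P 0 x).
- apply filter_forall; intros; apply (RInt_correct (V:=R_CompleteNormedModule)), ex_RInt_all, w_cont.
- apply w_cont.
Qed.

Lemma w_pos t : 0 < w t. Proof. apply exp_pos. Qed.

Lemma P_nonneg x : 0 <= x -> 0 <= P x.
Proof.
intros Hx; apply RInt_ge_0; auto. apply ex_RInt_all, w_cont.
intros; left; apply w_pos.
Qed.

Definition gk (x t : R) := exp (- (x^2 * (1 + t^2)) / 2) / (1 + t^2).
Definition G (x : R) : R := RInt (fun t => gk x t) 0 1.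

Lemma sq1_pos t : 0 < 1 + t^2.
Proof. nra. Qed.

Lemma gk_derive u v : Derive (fun z => gk z v) u = - u * exp (- (u^2 * (1 + v^2)) / 2).
Proof.
apply is_derive_unique. unfold gk.
assert (H := sq1_pos v).
auto_derive. lra. exp_unify. field. lra.
Qed.

Lemma cont2_expl x t : continuity_2d_pt (fun u v => - u * exp (- (u^2 * (1 + v^2)) / 2)) x t.
Proof.
apply continuity_2d_pt_mult.
- apply continuity_2d_pt_opp, continuity_2d_pt_id1.
- apply continuity_1d_2d_pt_comp.
  + apply derivable_continuous_pt, derivable_pt_exp.
  + apply continuity_2d_pt_ext with (f := fun u v => (-(1/2)) * ((u * u) * (1 + v * v))).
    { intros; field. }
    apply continuity_2d_pt_mult. apply continuity_2d_pt_const.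
    apply continuity_2d_pt_mult.
    apply continuity_2d_pt_mult; apply continuity_2d_pt_id1.
    apply continuity_2d_pt_plus. apply continuity_2d_pt_const.
    apply continuity_2d_pt_mult; apply continuity_2d_pt_id2.
Qed.

Lemma G_deriv x : is_derive G x (- w x * P x).
Proof.
assert (H : is_derive G x (RInt (fun t => Derive (fun u => gk u t) x) 0 1)).
{ unfold G. apply (is_derive_RInt_param gk 0 1 x).
  - apply filter_forall; intros x0 t _. unfold gk.
    assert (H := sq1_pos t). auto_derive. lra.
  - intros t _. eapply continuity_2d_pt_ext. 2: apply (cont2_expl x t).
    intros; simpl. rewrite gk_derive. reflexivity.
  - apply filter_forall; intros y. apply ex_RInt_all. intros t.
    unfold gk. assert (H := sq1_pos t). contd. lra. }
replace (- w x * P x) with (RInt (fun t => Derive (fun u => gk u t) x) 0 1); auto.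
rewrite (RInt_ext _ (fun t => (- w x) * (x * (w (x * t + 0))))).
2:{ intros t _. rewrite gk_derive. unfold w; rs.
    replace (exp (- (x ^ 2 * (1 + t ^ 2)) / 2)) with (exp (- x ^ 2 / 2) * exp (- (x * t + 0) ^ 2 / 2)) by (rewrite <- exp_plus; f_equal; field). ring. }
rewrite RInt_scalR.
2:{ apply ex_RInt_all. intros; unfold w. contd. }
rewrite RInt_comp_linR. 2: apply ex_RInt_all, w_cont.
unfold P. f_equal. f_equal; ring.
Qed.

Definition Hf (x : R) := P x * P x + 2 * G x.

Lemma Hf_deriv x : is_derive Hf x 0.
Proof.
replace 0 with (plus (plus (mult (w x) (P x)) (mult (P x) (w x))) (scal 2 (- w x * P x))) by (rs; ring).
apply (is_derive_plus (K:=R_AbsRing) (V:=R_NormedModule)).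
- apply (is_derive_mult (K:=R_AbsRing)); [apply P_deriv|apply P_deriv|intros; apply Rmult_comm].
- apply is_derive_scal, G_deriv.
Qed.

Lemma P0 : P 0 = 0.
Proof. apply RInt_pointR. Qed.

Lemma G0 : G 0 = PI / 4.
Proof.
unfold G. rewrite (RInt_ext _ (fun t => / (1 + t^2))).
2:{ intros t _. unfold gk. assert (E: - (0 ^ 2 * (1 + t ^ 2)) / 2 = 0) by field. rewrite E, exp_0. req. field. generalize (sq1_pos t); lra. }
apply is_RInt_unique.
replace (PI / 4) with (minus (atan 1) (atan 0)). 2:{ rs. rewrite atan_1, atan_0. field. }
apply (is_RInt_derive (V:=R_CompleteNormedModule)).
- intros; apply is_derive_Reals, derivable_pt_lim_atan.
- intros t _. generalize (sq1_pos t); intros. contd. lra.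
Qed.

Lemma Hf_const x : Hf x = PI / 2.
Proof.
rewrite (deriv0_const Hf Hf_deriv x). unfold Hf. rewrite P0, G0. field.
Qed.

Lemma G_bounds x : 0 <= G x <= exp (- x^2 / 2).
Proof.
assert (Hex : ex_RInt (fun t => gk x t) 0 1).
{ apply ex_RInt_all. intros t. unfold gk. generalize (sq1_pos t); intros. contd. lra. }
split.
- apply RInt_ge_0; auto. lra. intros t _. unfold gk. left. apply Rdiv_lt_0_compat. apply exp_pos. apply sq1_pos.
- unfold G. replace (exp (- x ^ 2 / 2)) with (RInt (fun _ => exp (- x ^ 2 / 2)) 0 1) by (rewrite RInt_constR; req; ring).
  apply RInt_le; auto. lra. apply ex_RInt_all; intros; contd.
  intros t Ht. unfold gk.
  assert (H1 : exp (- (x ^ 2 * (1 + t ^ 2)) / 2) <= exp (- x ^ 2 / 2)).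
  { destruct (Req_dec (- (x ^ 2 * (1 + t ^ 2)) / 2) (- x ^ 2 / 2)) as [E|E]. rewrite E; lra.
    left; apply exp_increasing. nra. }
  generalize (sq1_pos t); intros.
  apply Rle_trans with (exp (- (x ^ 2 * (1 + t ^ 2)) / 2)); auto.
  unfold Rdiv. rewrite <- (Rmult_1_r (exp (- (x ^ 2 * (1 + t ^ 2)) * / 2))) at 2.
  apply Rmult_le_compat_l. left; apply exp_pos.
  rewrite <- Rinv_1. apply Rinv_le_contravar. lra. nra.
Qed.

Definition Lg := sqrt (PI / 2).

Lemma Lg_pos : 0 < Lg.
Proof. unfold Lg. apply sqrt_lt_R0. generalize PI_RGT_0; lra. Qed.

Lemma P_lim_expl eps : 0 < eps -> exists M, forall x, M < x -> Rabs (P x - Lg) < eps.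
Proof.
intros He. generalize Lg_pos; intros HL.
exists (2 / (Lg * eps)). intros x Hx.
assert (HM : 0 < 2 / (Lg * eps)) by (apply Rdiv_lt_0_compat; [lra| apply Rmult_lt_0_compat; lra]).
assert (Hx0 : 0 < x) by lra.
assert (HP : 0 <= P x) by (apply P_nonneg; lra).
assert (HL2 : Lg * Lg = PI / 2) by (unfold Lg; apply sqrt_sqrt; generalize PI_RGT_0; lra).
assert (HH := Hf_const x). unfold Hf in HH.
destruct (G_bounds x) as [G1 G2].
assert (He2 : 1 + x^2/2 <= exp (x^2/2)) by apply exp_ineq1_le.
assert (He3 : exp (- x^2/2) * exp (x^2/2) = 1) by (rewrite <- exp_plus; replace (- x ^ 2 / 2 + x ^ 2 / 2) with 0 by field; apply exp_0).
assert (HxM : 2 < x * (Lg * eps)).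
{ apply Rmult_lt_compat_r with (r := Lg * eps) in Hx. 2: nra.
  unfold Rdiv in Hx. rewrite Rmult_assoc, Rinv_l in Hx. lra. nra. }
assert (HE : exp (- x^2/2) * x < 1) by nra.
assert (HPL : P x <= Lg) by nra.
rewrite Rabs_left1 by lra.
assert (H4 : Lg * (Lg - P x) <= 2 * G x) by nra.
assert (H5 : Lg * (Lg - P x) * x <= 2 * exp (- x^2/2) * x).
{ apply Rmult_le_compat_r; lra. }
assert (H6 : (Lg * x) * (Lg - P x) < (Lg * x) * eps) by nra.
apply Rmult_lt_reg_l in H6. lra. nra.
Qed.

Lemma P_odd u : P (- u) = - P u.
Proof.
unfold P.
assert (E := RInt_comp_linR w (-1) 0 0 u).
replace (-1 * 0 + 0) with 0 in E by ring. replace (-1 * u + 0) with (-u) in E by ring.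
rewrite <- E. 2: apply ex_RInt_all, w_cont.
rewrite (RInt_ext _ (fun y => -1 * w y)).
2:{ intros t _. unfold w. req. replace ((-1 * t + 0) ^ 2) with (t^2) by ring. ring. }
rewrite RInt_scalR. req. ring. apply ex_RInt_all, w_cont.
Qed.

Definition cN := / sqrt (2 * PI).

Lemma cN_Lg : cN * Lg = / 2.
Proof.
assert (Hs : 0 < sqrt (2 * PI)) by (apply sqrt_lt_R0; generalize PI_RGT_0; lra).
assert (E : Lg = sqrt (2 * PI) / 2).
{ unfold Lg. apply sqrt_lem_1. generalize PI_RGT_0; lra. lra.
  replace (sqrt (2 * PI) / 2 * (sqrt (2 * PI) / 2)) with (sqrt (2 * PI) * sqrt (2 * PI) / 4) by field.
  rewrite sqrt_sqrt. field. generalize PI_RGT_0; lra. }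
rewrite E. unfold cN. field. lra.
Qed.

Lemma Phi_eq x : Phi x = cN * P x + / 2.
Proof.
set (f := fun u => cN * P u).
assert (Hd : forall z, is_derive f z (cN * w z)).
{ intros z. unfold f. apply is_derive_scal, P_deriv. }
assert (HG : is_RInt_gen (Derive f) (Rbar_locally m_infty) (at_point x) (f x - cN * (- Lg))).
{ apply (is_RInt_gen_Derive (Fa := Rbar_locally m_infty) (Fb := at_point x)).
  - apply filter_forall. intros; eexists; apply Hd.
  - apply filter_forall. intros ab z _.
    apply continuous_ext with (f := fun z => cN * w z).
    { intros; symmetry; apply is_derive_unique, Hd. }
    unfold w; contd.
  - apply filterlim_locally. intros eps.
    assert (Hc : 0 < cN) by (unfold cN; apply Rinv_0_lt_compat, sqrt_lt_R0; generalize PI_RGT_0; lra).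
    destruct (P_lim_expl (eps / cN)) as [M HM].
    { apply Rdiv_lt_0_compat; [apply cond_pos| auto]. }
    exists (- M). intros u Hu.
    change (Rabs (f u - cN * - Lg) < eps).
    unfold f. rewrite <- (Ropp_involutive u), P_odd.
    replace (cN * - P (- u) - cN * - Lg) with (- (cN * (P (-u) - Lg))) by ring.
    rewrite Rabs_Ropp, Rabs_mult, Rabs_pos_eq by lra.
    assert (H1 := HM (- u) ltac:(lra)).
    apply Rmult_lt_compat_l with (r := cN) in H1; auto.
    replace (cN * (eps / cN)) with (pos eps) in H1 by (field; lra). auto.
  - intros Q HQ. exact (locally_singleton _ _ HQ). }
assert (HG2 : is_RInt_gen std_normal_pdf (Rbar_locally m_infty) (at_point x) (f x - cN * (- Lg))).
{ eapply (is_RInt_gen_ext (Derive f)); [ | exact HG ].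
  apply filter_forall. intros ab z _. rewrite (is_derive_unique _ _ _ (Hd z)). reflexivity. }
unfold Phi. rewrite (is_RInt_gen_unique _ _ HG2). unfold f.
rewrite <- cN_Lg. req. ring.
Qed.

Lemma RInt_gt0 (g : R -> R) u v : u < v -> (forall t, continuous g t) ->
  (forall t, u <= t <= v -> 0 <= g t) -> (exists t1, u <= t1 <= v /\ 0 < g t1) ->
  0 < RInt g u v.
Proof.
intros Huv Hc Hpos [t1 [Ht1 Hg1]].
assert (Hh : 0 < g t1 / 2) by lra.
destruct (proj1 (filterlim_locally g (g t1)) (Hc t1) (mkposreal _ Hh)) as [d Hd].
set (p := Rmax u (t1 - d/2)). set (q := Rmin v (t1 + d/2)).
assert (Hd0 := cond_pos d).
assert (Hp1 : u <= p) by apply Rmax_l. assert (Hq1 : q <= v) by apply Rmin_l.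
assert (Hp2 : t1 - d/2 <= p) by apply Rmax_r. assert (Hq2 : q <= t1 + d/2) by apply Rmin_r.
assert (Hp3 : p <= t1) by (unfold p; apply Rmax_lub; lra).
assert (Hq3 : t1 <= q) by (unfold q; apply Rmin_glb; lra).
assert (Hpq : p < q).
{ unfold p, q. destruct (Rle_dec u (t1 - d/2)); destruct (Rle_dec (t1 + d/2) v).
  rewrite Rmax_right, Rmin_right; lra.
  rewrite Rmax_right, Rmin_left; lra.
  rewrite Rmax_left, Rmin_right; lra.
  rewrite Rmax_left, Rmin_left; lra. }
assert (Hex : forall a b, ex_RInt g a b) by (intros; apply ex_RInt_all; auto).
rewrite <- (RInt_ChaslesR g u p v) by auto.
rewrite <- (RInt_ChaslesR g p q v) by auto.
assert (0 <= RInt g u p) by (apply RInt_ge_0; [lra | auto | intros; apply Hpos; lra]).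
assert (0 <= RInt g q v) by (apply RInt_ge_0; [lra | auto | intros; apply Hpos; lra]).
assert (RInt (fun _ => g t1 / 2) p q <= RInt g p q).
{ apply RInt_le; auto. lra. apply ex_RInt_all; intros; apply continuous_const.
  intros t Ht. assert (Hb : ball t1 d t).
  { unfold ball; simpl; unfold AbsRing_ball, abs, minus, plus, opp; simpl. apply Rabs_def1; lra. }
  specialize (Hd t Hb). unfold ball in Hd; simpl in Hd; unfold AbsRing_ball, abs, minus, plus, opp in Hd; simpl in Hd.
  apply Rabs_def2 in Hd. lra. }
rewrite RInt_constR in H1.
assert (0 < (q - p) * (g t1 / 2)) by (apply Rmult_lt_0_compat; lra).
lra.
Qed.

Definition cy (y t : R) := exp (y*t) + exp (-(y*t)).
Definition J (a y : R) : R := RInt (fun t => w t * cy y t) 0 a.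
Definition EE a y := P (y + a) - P (y - a).

Lemma w_shift y t : w (y + t) = exp (-y^2/2) * (w t * exp (-(y*t))).
Proof. unfold w. rewrite <- !exp_plus. f_equal. field. Qed.
Lemma w_shift' y t : w (y - t) = exp (-y^2/2) * (w t * exp (y*t)).
Proof. unfold w. rewrite <- !exp_plus. f_equal. field. Qed.

Lemma cont_wcy y t : continuous (fun t => w t * cy y t) t.
Proof. unfold w, cy. contd. Qed.

Lemma EE_J a y : EE a y = exp (-y^2/2) * J a y.
Proof.
assert (Hw : forall a b, ex_RInt w a b) by (intros; apply ex_RInt_all, w_cont).
unfold EE, P.
rewrite <- (RInt_ChaslesR w 0 (y - a) (y + a)) by auto.
rewrite <- (RInt_ChaslesR w (y - a) y (y + a)) by auto.
assert (E1 : RInt w y (y + a) = RInt (fun t => w (y + t)) 0 a).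
{ assert (E := RInt_comp_linR w 1 y 0 a).
  replace (1 * 0 + y) with y in E by ring. replace (1 * a + y) with (y + a) in E by ring.
  rewrite <- E by auto. apply RInt_ext. intros. req. replace (1 * x + y) with (y + x) by ring. ring. }
assert (E2 : RInt w (y - a) y = RInt (fun t => w (y - t)) 0 a).
{ assert (E := RInt_comp_linR w (-1) y a 0).
  replace (-1 * 0 + y) with y in E by ring. replace (-1 * a + y) with (y - a) in E by ring.
  rewrite <- E by auto. rewrite <- RInt_swapR.
  2:{ apply ex_RInt_all. intros. unfold w. contd. }
  rewrite RInt_scalR.
  2:{ apply ex_RInt_all. intros. unfold w. contd. }
  rewrite (RInt_ext (fun y0 => w (-1 * y0 + y)) (fun t => w (y - t))).
  2:{ intros. replace (-1 * x + y) with (y - x) by ring. reflexivity. }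
  req. ring. }
rewrite E1, E2.
rewrite <- RInt_plusR.
2,3: apply ex_RInt_all; intros; unfold w; contd.
unfold J. rewrite <- RInt_scalR.
2: apply ex_RInt_all; intros; apply cont_wcy.
match goal with |- ?A + ?B - ?A = ?C => replace (A + B - A) with B by (req; lra) end.
apply RInt_ext. intros t _. rewrite w_shift, w_shift'. unfold cy. req. ring.
Qed.

Ltac exri := apply ex_RInt_all; intros; unfold w, cy; contd.

Lemma J_even a y : J a (- y) = J a y.
Proof. unfold J, cy. apply RInt_ext. intros. replace (- y * x) with (- (y * x)) by ring.
rewrite Ropp_involutive. req. ring. Qed.

Lemma J_abs a y : J a (Rabs y) = J a y.
Proof. destruct (Rle_dec 0 y). rewrite Rabs_pos_eq; auto. rewrite Rabs_left, J_even; auto; lra. Qed.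

Lemma EE_even a y : EE a (- y) = EE a y.
Proof. rewrite !EE_J, J_even. f_equal. f_equal. field. Qed.

Lemma EE_abs a y : EE a (Rabs y) = EE a y.
Proof. destruct (Rle_dec 0 y). rewrite Rabs_pos_eq; auto. rewrite Rabs_left, EE_even; auto; lra. Qed.

Lemma cosh_lt u v : 0 <= u < v -> exp u + exp (- u) < exp v + exp (- v).
Proof.
intros [H1 H2].
rewrite !exp_Ropp.
assert (A1 : 1 <= exp u) by (rewrite <- exp_0; destruct H1; [left; apply exp_increasing; auto| subst; right; auto]).
assert (A2 : exp u < exp v) by (apply exp_increasing; auto).
assert (HA : 0 < exp u) by apply exp_pos. assert (HB : 0 < exp v) by apply exp_pos.
set (A := exp u) in *. set (B := exp v) in *.
apply Rmult_lt_reg_r with (r := A * B). nra.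
replace ((A + / A) * (A * B)) with (A * A * B + B) by (field; lra).
replace ((B + / B) * (A * B)) with (B * B * A + A) by (field; lra).
assert (1 < A * B) by nra.
assert (0 < (B - A) * (A * B - 1)) by (apply Rmult_lt_0_compat; lra).
nra.
Qed.

Lemma cosh_le u v : 0 <= u <= v -> exp u + exp (- u) <= exp v + exp (- v).
Proof. intros [H1 H2]. destruct H2. left; apply cosh_lt; lra. subst; lra. Qed.

Lemma J_pos a y : 0 < a -> 0 < J a y.
Proof.
intros Ha. unfold J. apply RInt_gt0; auto. intros; apply cont_wcy.
intros t _. left. apply Rmult_lt_0_compat. apply w_pos. unfold cy. generalize (exp_pos (y*t)) (exp_pos (-(y*t))); lra.
exists 0. split. lra. apply Rmult_lt_0_compat. apply w_pos. unfold cy. generalize (exp_pos (y*0)) (exp_pos (-(y*0))); lra.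
Qed.

Lemma J_strict a x y : 0 < a -> Rabs x < Rabs y -> J a x < J a y.
Proof.
intros Ha Hxy.
rewrite <- (J_abs a x), <- (J_abs a y).
assert (Hx := Rabs_pos x).
set (u := Rabs x) in *. set (v := Rabs y) in *.
apply Rminus_gt_0_lt. unfold J.
rewrite <- RInt_minusR by exri.
rewrite (RInt_ext _ (fun t => w t * (cy v t - cy u t))) by (intros; req; ring).
apply RInt_gt0; auto.
- intros; unfold w, cy; contd.
- intros t Ht. apply Rmult_le_pos. left; apply w_pos. unfold cy.
  assert (u * t <= v * t) by nra. assert (0 <= u * t) by nra.
  generalize (cosh_le (u * t) (v * t)); lra.
- exists a. split. lra. apply Rmult_lt_0_compat. apply w_pos. unfold cy.
  assert (u * a < v * a) by nra. assert (0 <= u * a) by nra.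
  generalize (cosh_lt (u * a) (v * a)); lra.
Qed.

Lemma w_lt s t : 0 <= s < t -> w t < w s.
Proof. intros H. unfold w. apply exp_increasing. nra. Qed.
Lemma w_le s t : 0 <= s <= t -> w t <= w s.
Proof. intros [H1 H2]. destruct H2. left; apply w_lt; lra. subst; lra. Qed.
Lemma w_le1 t : w t <= 1.
Proof. unfold w. rewrite <- exp_0. destruct (Req_dec t 0). subst. right; f_equal; field.
left; apply exp_increasing. assert (0 < t^2) by nra. lra. Qed.

Lemma W_pos a : 0 < a -> 0 < P a.
Proof. intros Ha. unfold P. apply RInt_gt0; auto. apply w_cont. intros; left; apply w_pos.
exists 0; split; [lra | apply w_pos]. Qed.

Lemma W_le a : 0 < a -> P a <= a.
Proof. intros Ha. unfold P. replace a with (RInt (fun _ => 1) 0 a) at 2 by (rewrite RInt_constR; req; ring).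
apply RInt_le. lra. apply ex_RInt_all, w_cont. exri. intros; apply w_le1. Qed.

Definition C (a y : R) : R := RInt (cy y) 0 a.

Lemma C_id a y : y * C a y = exp (y * a) - exp (- (y * a)).
Proof.
unfold C. rewrite <- RInt_scalR by exri.
apply is_RInt_unique.
replace (exp (y * a) - exp (- (y * a))) with (minus ((fun t => exp (y * t) - exp (- (y * t))) a) ((fun t => exp (y * t) - exp (- (y * t))) 0)).
2:{ rs. rewrite Rmult_0_r, Ropp_0, exp_0. ring. }
apply (is_RInt_derive (V:=R_CompleteNormedModule) (fun t => exp (y * t) - exp (- (y * t)))).
- intros t _. auto_derive. auto. unfold cy. ring.
- intros; unfold cy; contd.
Qed.

Lemma cheb a y : 0 < a -> 0 < y -> a * J a y < P a * C a y.
Proof.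
intros Ha Hy.
set (W := P a).
assert (HW := W_pos a Ha). assert (HWa := W_le a Ha). fold W in HW, HWa.
set (K := W / a).
assert (HK0 : 0 < K) by (apply Rdiv_lt_0_compat; auto).
assert (HK1 : K <= 1) by (unfold K; apply Rmult_le_reg_r with a; auto; field_simplify; lra).
assert (Hln : ln K <= 0) by (rewrite <- ln_1; apply ln_le; auto).
set (t0 := sqrt (- 2 * ln K)).
assert (Ht0 : 0 <= t0) by apply sqrt_pos.
assert (Hwt0 : w t0 = K).
{ unfold w, t0. rewrite <- Rsqr_pow2, Rsqr_sqrt by lra.
  replace (- (-2 * ln K) / 2) with (ln K) by field. apply exp_ln; auto. }
set (F := fun t => (w t - K) * (cy y t - cy y t0)).
assert (HF : forall t, 0 <= t -> F t <= 0).
{ intros t Ht. unfold F. destruct (Rle_dec t t0).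
  - assert (w t0 <= w t) by (apply w_le; lra).
    assert (cy y t <= cy y t0) by (unfold cy; apply cosh_le; nra).
    assert (0 <= w t - K) by lra. assert (cy y t - cy y t0 <= 0) by lra. nra.
  - assert (w t <= w t0) by (apply w_le; lra).
    assert (cy y t0 <= cy y t) by (unfold cy; apply cosh_le; nra).
    assert (w t - K <= 0) by lra. assert (0 <= cy y t - cy y t0) by lra. nra. }
assert (HFs : forall t, 0 <= t -> t <> t0 -> F t < 0).
{ intros t Ht Hne. unfold F. destruct (Rle_dec t t0).
  - assert (w t0 < w t) by (apply w_lt; lra).
    assert (cy y t < cy y t0) by (unfold cy; apply cosh_lt; split; [nra|]; apply Rmult_lt_compat_l; lra).
    assert (0 < w t - K) by lra. assert (cy y t - cy y t0 < 0) by lra. nra.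
  - assert (w t < w t0) by (apply w_lt; lra).
    assert (cy y t0 < cy y t) by (unfold cy; apply cosh_lt; split; [nra|]; apply Rmult_lt_compat_l; lra).
    assert (w t - K < 0) by lra. assert (0 < cy y t - cy y t0) by lra. nra. }
assert (HI : 0 < RInt (fun t => - F t) 0 a).
{ apply RInt_gt0; auto.
  - intros; unfold F, w, cy; contd.
  - intros t Ht. generalize (HF t ltac:(lra)); lra.
  - destruct (Req_dec t0 a) as [E|E].
    + exists 0. split. lra. generalize (HFs 0 ltac:(lra) ltac:(lra)); lra.
    + exists a. split. lra. generalize (HFs a ltac:(lra) ltac:(auto)); lra. }
assert (HE : RInt (fun t => - F t) 0 a = K * C a y - J a y).
{ rewrite (RInt_ext _ (fun t => (K * cy y t - K * cy y t0) - (w t * cy y t - cy y t0 * w t))).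
  2:{ intros; unfold F. req; ring. }
  rewrite RInt_minusR by exri. rewrite RInt_minusR by exri. rewrite RInt_minusR by exri.
  rewrite RInt_scalR by exri. rewrite (RInt_scalR w) by exri.
  rewrite RInt_constR. fold (C a y). fold (J a y). change (RInt w 0 a) with W.
  unfold K. req. field. lra. }
rewrite HE in HI.
assert (HI2 : J a y < W / a * C a y) by (unfold K in HI; lra).
apply Rmult_lt_compat_l with (r := a) in HI2; auto.
replace (a * (W / a * C a y)) with (W * C a y) in HI2 by (field; lra). auto.
Qed.

Lemma EE_deriv a y : is_derive (EE a) y (w (y + a) - w (y - a)).
Proof.
assert (D1 : is_derive (fun y => P (y + a)) y (w (y + a))).
{ replace (w (y + a)) with (scal 1 (w (y + a))) by (rs; ring).
  apply (is_derive_comp P (fun y => y + a)). apply P_deriv. auto_derive; auto. }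
assert (D2 : is_derive (fun y => P (y - a)) y (w (y - a))).
{ replace (w (y - a)) with (scal 1 (w (y - a))) by (rs; ring).
  apply (is_derive_comp P (fun y => y - a)). apply P_deriv. auto_derive; auto. }
apply (is_derive_minus (K:=R_AbsRing) (V:=R_NormedModule) _ _ _ _ _ D1 D2).
Qed.

Definition Qf (a b y : R) : R := EE a y * exp (b * y ^ 2 / 2).

Lemma Qf_deriv a b y : is_derive (Qf a b) y ((w (y + a) - w (y - a) + b * y * EE a y) * exp (b * y ^ 2 / 2)).
Proof.
unfold Qf.
replace ((w (y + a) - w (y - a) + b * y * EE a y) * exp (b * y ^ 2 / 2))
 with (plus (mult (w (y + a) - w (y - a)) (exp (b * y ^ 2 / 2))) (mult (EE a y) (b * y * exp (b * y ^ 2 / 2)))) by (rs; ring).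
apply (is_derive_mult (K:=R_AbsRing) (EE a) (fun y => exp (b * y ^ 2 / 2))). apply EE_deriv.
auto_derive; auto. exp_unify. field. intros; apply Rmult_comm.
Qed.

Definition betaW (a : R) : R := a * w a / P a.

Lemma right_deriv_neg a y : 0 < a -> 0 < y -> w (y + a) - w (y - a) + betaW a * y * EE a y < 0.
Proof.
intros Ha Hy.
assert (Hc := cheb a y Ha Hy). assert (HC := C_id a y). assert (HW := W_pos a Ha).
rewrite w_shift, w_shift', EE_J. unfold betaW.
assert (E1 : exp (y * a) = y * C a y + exp (- (y * a))) by lra.
rewrite E1.
replace (exp (- y ^ 2 / 2) * (w a * exp (- (y * a))) - exp (- y ^ 2 / 2) * (w a * (y * C a y + exp (- (y * a)))) +
   a * w a / P a * y * (exp (- y ^ 2 / 2) * J a y))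
  with ((exp (- y ^ 2 / 2) * (w a * y / P a)) * (a * J a y - P a * C a y)) by (field; lra).
assert (0 < exp (- y ^ 2 / 2) * (w a * y / P a)).
{ apply Rmult_lt_0_compat. apply exp_pos. apply Rdiv_lt_0_compat; auto. apply Rmult_lt_0_compat; auto; apply w_pos. }
nra.
Qed.

Lemma Qf_decr a x y : 0 < a -> 0 <= x -> x < y -> Qf a (betaW a) y < Qf a (betaW a) x.
Proof.
intros Ha Hx Hxy.
assert (H := incr_strict (fun y => - Qf a (betaW a) y) (fun y => - ((w (y + a) - w (y - a) + betaW a * y * EE a y) * exp (betaW a * y ^ 2 / 2))) 0).
assert (- Qf a (betaW a) x < - Qf a (betaW a) y); [|lra].
apply H; auto.
- intros z _. apply (is_derive_opp (K:=R_AbsRing) (V:=R_NormedModule)). apply Qf_deriv.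
- intros z Hz. assert (Hn := right_deriv_neg a z Ha Hz). assert (He := exp_pos (betaW a * z ^ 2 / 2)). nra.
Qed.

Lemma EE_pos a y : 0 < a -> 0 < EE a y.
Proof. intros Ha. rewrite EE_J. apply Rmult_lt_0_compat. apply exp_pos. apply J_pos; auto. Qed.

Lemma right_ineq a x y : 0 < a -> Rabs x < Rabs y ->
  EE a y / EE a x < exp (- betaW a * ((y ^ 2 - x ^ 2) / 2)).
Proof.
intros Ha Hxy.
assert (Hq := Qf_decr a (Rabs x) (Rabs y) Ha (Rabs_pos x) Hxy).
unfold Qf in Hq. rewrite !EE_abs in Hq. rewrite <- !Rsqr_pow2, <- !Rsqr_abs, !Rsqr_pow2 in Hq.
assert (Hx := EE_pos a x Ha). assert (Hy := EE_pos a y Ha).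
assert (E : exp (- betaW a * ((y ^ 2 - x ^ 2) / 2)) = exp (betaW a * x ^ 2 / 2) / exp (betaW a * y ^ 2 / 2)).
{ unfold Rdiv. rewrite <- exp_Ropp, <- exp_plus. f_equal. field. }
rewrite E.
assert (H1 := exp_pos (betaW a * x ^ 2 / 2)). assert (H2 := exp_pos (betaW a * y ^ 2 / 2)).
apply Rmult_lt_reg_r with (r := EE a x * exp (betaW a * y ^ 2 / 2)). nra.
replace (EE a y / EE a x * (EE a x * exp (betaW a * y ^ 2 / 2))) with (EE a y * exp (betaW a * y ^ 2 / 2)) by (field; lra).
replace (exp (betaW a * x ^ 2 / 2) / exp (betaW a * y ^ 2 / 2) * (EE a x * exp (betaW a * y ^ 2 / 2))) with (EE a x * exp (betaW a * x ^ 2 / 2)) by (field; lra).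
auto.
Qed.

Lemma left_ineq a x y : 0 < a -> Rabs x < Rabs y ->
  exp (- 1 * ((y ^ 2 - x ^ 2) / 2)) < EE a y / EE a x.
Proof.
intros Ha Hxy.
assert (HJ := J_strict a x y Ha Hxy).
assert (Jx := J_pos a x Ha).
rewrite !EE_J.
assert (E : exp (- 1 * ((y ^ 2 - x ^ 2) / 2)) = exp (- y ^ 2 / 2) / exp (- x ^ 2 / 2)).
{ unfold Rdiv. rewrite <- exp_Ropp, <- exp_plus. f_equal. field. }
rewrite E.
assert (H1 := exp_pos (- x ^ 2 / 2)). assert (H2 := exp_pos (- y ^ 2 / 2)).
replace (exp (- y ^ 2 / 2) * J a y / (exp (- x ^ 2 / 2) * J a x)) with (exp (- y ^ 2 / 2) / exp (- x ^ 2 / 2) * (J a y / J a x)) by (field; lra).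
assert (1 < J a y / J a x).
{ apply Rmult_lt_reg_r with (J a x); auto. field_simplify; lra. }
assert (0 < exp (- y ^ 2 / 2) / exp (- x ^ 2 / 2)) by (apply Rdiv_lt_0_compat; auto).
nra.
Qed.

Lemma J0 a : J a 0 = 2 * P a.
Proof. unfold J, P. rewrite <- RInt_scalR by exri. apply RInt_ext. intros. unfold cy.
rewrite Rmult_0_l, Ropp_0, exp_0. req. ring. Qed.

Lemma EE0 a : EE a 0 = 2 * P a.
Proof. rewrite EE_J, J0. replace (- 0 ^ 2 / 2) with 0 by field. rewrite exp_0. req. ring. Qed.

Lemma J_upper a y : 0 < a -> 0 < y -> J a y <= 2 * exp (y * a) * P a.
Proof.
intros Ha Hy. unfold J, P. rewrite <- RInt_scalR by exri.
apply RInt_le. lra. exri. exri.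
intros t Ht. unfold cy.
assert (exp (y * t) <= exp (y * a)) by (left; apply exp_increasing; nra).
assert (exp (- (y * t)) <= exp (y * a)) by (left; apply exp_increasing; nra).
assert (0 < w t) by apply w_pos. nra.
Qed.

Lemma alpha_opt a al : 0 < a -> al < 1 -> exists y, Rabs 0 < Rabs y /\
  ~ (exp (- al * ((y ^ 2 - 0 ^ 2) / 2)) < EE a y / EE a 0).
Proof.
intros Ha Hal.
set (y := 2 * a / (1 - al) + 1).
assert (Hy : 0 < y) by (unfold y; assert (0 < 2 * a / (1 - al)) by (apply Rdiv_lt_0_compat; lra); lra).
exists y. split. rewrite Rabs_R0, Rabs_pos_eq; lra.
apply Rle_not_lt.
assert (HW := W_pos a Ha).
rewrite EE0, EE_J.
assert (HJ := J_upper a y Ha Hy).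
apply Rle_trans with (exp (- y ^ 2 / 2) * exp (y * a)).
{ apply Rmult_le_reg_r with (2 * P a). lra.
  replace (exp (- y ^ 2 / 2) * J a y / (2 * P a) * (2 * P a)) with (exp (- y ^ 2 / 2) * J a y) by (field; lra).
  assert (H := exp_pos (- y ^ 2 / 2)). nra. }
rewrite <- exp_plus.
assert (Hk : a <= (1 - al) * y / 2).
{ unfold y. replace ((1 - al) * (2 * a / (1 - al) + 1) / 2) with (a + (1 - al) / 2) by (field; lra). lra. }
destruct (Req_dec (- y ^ 2 / 2 + y * a) (- al * ((y ^ 2 - 0 ^ 2) / 2))) as [E|E].
rewrite E; lra.
left; apply exp_increasing.
assert (y * a <= y * ((1 - al) * y / 2)) by (apply Rmult_le_compat_l; lra).
assert (- y ^ 2 / 2 + y * a <= - al * ((y ^ 2 - 0 ^ 2) / 2)).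
{ replace (- al * ((y ^ 2 - 0 ^ 2) / 2)) with (- y ^ 2 / 2 + y * ((1 - al) * y / 2)) by field. lra. }
lra.
Qed.

Lemma t2w a : RInt (fun t => t ^ 2 * w t) 0 a = P a - a * w a.
Proof.
assert (E : RInt (fun t => t ^ 2 * w t - w t) 0 a = - a * w a).
{ apply is_RInt_unique.
  replace (- a * w a) with (minus ((fun t => - t * w t) a) ((fun t => - t * w t) 0)) by (rs; req; ring).
  apply (is_RInt_derive (V:=R_CompleteNormedModule) (fun t => - t * w t)).
  - intros t _. unfold w. auto_derive; auto. req. exp_unify. field.
  - intros; unfold w; contd. }
rewrite RInt_minusR in E by exri. unfold P. req. lra.
Qed.

Lemma cosh_quad u : 2 + u ^ 2 <= exp u + exp (- u).
Proof.
assert (Hm : forall v, 0 < v -> 0 < exp v - exp (- v) - 2 * v).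
{ intros v Hv.
  assert (H := incr_strict (fun v => exp v - exp (- v) - 2 * v) (fun v => exp v + exp (- v) - 2) 0).
  assert (H0 : exp 0 - exp (- 0) - 2 * 0 = 0) by (rewrite Ropp_0, exp_0; ring).
  rewrite <- H0. apply H; try lra.
  - intros; auto_derive; auto; ring.
  - intros z Hz. generalize (cosh_lt 0 z ltac:(lra)). rewrite Ropp_0, exp_0. lra. }
assert (Hk : forall v, 0 < v -> 0 < exp v + exp (- v) - 2 - v ^ 2).
{ intros v Hv.
  assert (H := incr_strict (fun v => exp v + exp (- v) - 2 - v ^ 2) (fun v => exp v - exp (- v) - 2 * v) 0).
  assert (H0 : exp 0 + exp (- 0) - 2 - 0 ^ 2 = 0) by (rewrite Ropp_0, exp_0; field).
  rewrite <- H0. apply H; try lra.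
  - intros; auto_derive; auto; field.
  - intros z Hz; apply Hm; auto. }
destruct (Rtotal_order u 0) as [H|[H|H]].
- generalize (Hk (- u) ltac:(lra)). rewrite Ropp_involutive. intros. nra.
- subst. rewrite Ropp_0, exp_0. lra.
- generalize (Hk u H). lra.
Qed.

Lemma J_lower a y : 0 < a -> 2 * P a + y ^ 2 * (P a - a * w a) <= J a y.
Proof.
intros Ha. rewrite <- t2w. unfold P.
rewrite <- (RInt_scalR w) by exri. rewrite <- (RInt_scalR (fun t => t ^ 2 * w t)) by exri.
rewrite <- RInt_plusR by exri.
unfold J. apply RInt_le. lra. exri. exri.
intros t _. unfold cy. assert (H := cosh_quad (y * t)). assert (0 < w t) by apply w_pos.
replace (2 * w t + y ^ 2 * (t ^ 2 * w t)) with (w t * (2 + (y * t) ^ 2)) by ring.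
apply Rmult_le_compat_l; lra.
Qed.

Lemma Pa_gt a : 0 < a -> a * w a < P a.
Proof.
intros Ha. apply Rminus_gt_0_lt. rewrite <- t2w. apply RInt_gt0; auto.
intros; unfold w; contd. intros; assert (0 < w t) by apply w_pos; nra.
exists a; split; [lra|]. assert (0 < w a) by apply w_pos. apply Rmult_lt_0_compat; auto. apply pow_lt; auto.
Qed.

Lemma beta_opt a b : 0 < a -> betaW a < b -> exists y, Rabs 0 < Rabs y /\
  ~ (EE a y / EE a 0 < exp (- b * ((y ^ 2 - 0 ^ 2) / 2))).
Proof.
intros Ha Hb.
assert (HW := W_pos a Ha). assert (HPa := Pa_gt a Ha). assert (Hwa := w_pos a).
set (be := betaW a) in *.
assert (Hbe : be < 1) by (unfold be, betaW; apply Rmult_lt_reg_r with (P a); auto; field_simplify; lra).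
assert (Hbe0 : 0 < be) by (unfold be, betaW; apply Rdiv_lt_0_compat; nra).
set (D := 1 + Rabs (b - 1)).
assert (HD : 1 <= D) by (unfold D; generalize (Rabs_pos (b - 1)); lra).
set (s := (b - be) / ((1 - be) * D)).
assert (Hs : 0 < s) by (unfold s; apply Rdiv_lt_0_compat; nra).
set (y := sqrt (2 * s)).
assert (Hy2 : y ^ 2 = 2 * s) by (unfold y; rewrite <- Rsqr_pow2, Rsqr_sqrt; lra).
assert (Hy : 0 < y) by (unfold y; apply sqrt_lt_R0; lra).
exists y. split. rewrite Rabs_R0, Rabs_pos_eq; lra.
apply Rle_not_lt.
rewrite EE0, EE_J.
assert (HJ := J_lower a y Ha).
replace (- b * ((y ^ 2 - 0 ^ 2) / 2)) with (- s + - ((b - 1) * s)) by (rewrite Hy2; field).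
replace (- y ^ 2 / 2) with (- s) by (rewrite Hy2; field).
rewrite exp_plus.
assert (HE1 := exp_pos (- s)).
set (E := exp ((b - 1) * s)).
assert (HE : 1 + (b - 1) * s <= E) by apply exp_ineq1_le.
assert (HEp : 0 < E) by apply exp_pos.
assert (HEi : exp (- ((b - 1) * s)) = / E) by apply exp_Ropp.
rewrite HEi.
assert (Hkey : 1 <= E * (1 + s * (1 - be))).
{ assert (Hq : 0 <= (b - be) + (b - 1) * (1 - be) * s).
  { unfold s. replace ((b - be) + (b - 1) * (1 - be) * ((b - be) / ((1 - be) * D))) with ((b - be) * (D + (b - 1)) / D) by (field; lra).
    apply Rdiv_le_0_compat; [|lra]. apply Rmult_le_pos. lra.
    unfold D. destruct (Rle_dec 0 (b - 1)). rewrite Rabs_pos_eq; lra. rewrite Rabs_left; lra. }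
  assert (1 <= (1 + (b - 1) * s) * (1 + s * (1 - be))) by nra.
  assert (0 < 1 + s * (1 - be)) by nra. nra. }
assert (Hbe_eq : P a - a * w a = P a * (1 - be)) by (unfold be, betaW; field; lra).
rewrite Hbe_eq in HJ.
apply Rle_trans with (exp (- s) * (1 + s * (1 - be))).
- apply Rmult_le_compat_l. lra.
  apply Rmult_le_reg_l with E; auto. rewrite Rinv_r; lra.
- apply Rmult_le_reg_r with (2 * P a). lra.
  replace (exp (- s) * J a y / (2 * P a) * (2 * P a)) with (exp (- s) * J a y) by (field; lra).
  rewrite Hy2 in HJ.
  assert (exp (- s) * (2 * P a + 2 * s * (P a * (1 - be))) <= exp (- s) * J a y) by (apply Rmult_le_compat_l; lra).
  nra.
Qed.

Lemma p_pos u : 0 < u -> 1 < exp (u / 3 + u ^ 2 / 90) * (1 - u / 3 + 2 * u ^ 2 / 45).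
Proof.
intros Hu.
assert (H := incr_strict (fun u => exp (u / 3 + u ^ 2 / 90) * (1 - u / 3 + 2 * u ^ 2 / 45))
   (fun u => exp (u / 3 + u ^ 2 / 90) * (u ^ 2 / 135 + 2 * u ^ 3 / 2025)) 0).
assert (H0 : exp (0 / 3 + 0 ^ 2 / 90) * (1 - 0 / 3 + 2 * 0 ^ 2 / 45) = 1).
{ replace (0 / 3 + 0 ^ 2 / 90) with 0 by field. rewrite exp_0. field. }
rewrite <- H0 at 1. apply H; try lra.
- intros; auto_derive; auto. exp_unify. field.
- intros z Hz. apply Rmult_lt_0_compat. apply exp_pos.
  assert (0 < z ^ 2) by (apply pow_lt; auto). assert (0 < z ^ 3) by (apply pow_lt; auto). lra.
Qed.

Lemma W_upper a : 0 < a -> P a < a * exp (- a ^ 2 / 6 + a ^ 4 / 90).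
Proof.
intros Ha.
assert (H := incr_strict (fun z => z * exp (- z ^ 2 / 6 + z ^ 4 / 90) - P z)
   (fun z => exp (- z ^ 2 / 6 + z ^ 4 / 90) * (1 - z ^ 2 / 3 + 2 * z ^ 4 / 45) - w z) 0).
assert (H0 : 0 * exp (- 0 ^ 2 / 6 + 0 ^ 4 / 90) - P 0 = 0) by (rewrite P0; ring).
assert (0 < a * exp (- a ^ 2 / 6 + a ^ 4 / 90) - P a); [|lra].
rewrite <- H0. apply H; try lra.
- intros z _.
  apply (is_derive_minus (K:=R_AbsRing) (V:=R_NormedModule) (fun z => z * exp (- z ^ 2 / 6 + z ^ 4 / 90)) P).
  auto_derive; auto. exp_unify. field. apply P_deriv.
- intros z Hz.
  assert (Hp := p_pos (z ^ 2) ltac:(apply pow_lt; auto)).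
  assert (E : exp (- z ^ 2 / 6 + z ^ 4 / 90) = w z * exp (z ^ 2 / 3 + (z ^ 2) ^ 2 / 90)).
  { unfold w. rewrite <- exp_plus. f_equal. field. }
  rewrite E. replace ((z ^ 2) ^ 2) with (z ^ 4) in Hp by ring.
  assert (Hw := w_pos z).
  replace (w z * exp (z ^ 2 / 3 + (z ^ 2) ^ 2 / 90) * (1 - z ^ 2 / 3 + 2 * z ^ 4 / 45) - w z)
    with (w z * (exp (z ^ 2 / 3 + z ^ 4 / 90) * (1 - z ^ 2 / 3 + 2 * z ^ 4 / 45) - 1)).
  2:{ replace ((z ^ 2) ^ 2) with (z ^ 4) by ring. ring. }
  apply Rmult_lt_0_compat; lra.
Qed.

Lemma beta_lower a : 0 < a -> exp (- (2 * a) ^ 2 / 12 - (2 * a) ^ 4 / 1440) < betaW a.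
Proof.
intros Ha. assert (HU := W_upper a Ha). assert (HW := W_pos a Ha).
assert (Hwa := w_pos a).
unfold betaW.
replace (- (2 * a) ^ 2 / 12 - (2 * a) ^ 4 / 1440) with (- a ^ 2 / 2 - (- a ^ 2 / 6 + a ^ 4 / 90)) by field.
unfold Rminus at 1. rewrite exp_plus, exp_Ropp. fold (w a).
assert (HE := exp_pos (- a ^ 2 / 6 + a ^ 4 / 90)).
apply Rmult_lt_reg_r with (P a * exp (- a ^ 2 / 6 + a ^ 4 / 90)). nra.
replace (w a * / exp (- a ^ 2 / 6 + a ^ 4 / 90) * (P a * exp (- a ^ 2 / 6 + a ^ 4 / 90))) with (w a * P a) by (field; lra).
replace (a * w a / P a * (P a * exp (- a ^ 2 / 6 + a ^ 4 / 90))) with (w a * (a * exp (- a ^ 2 / 6 + a ^ 4 / 90))) by (field; lra).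
apply Rmult_lt_compat_l; auto.
Qed.

Lemma elem_ineq h : h <> 0 -> 1 - h ^ 2 / 12 < exp (- h ^ 2 / 12 - h ^ 4 / 1440).
Proof.
intros Hh.
set (u := h ^ 2 / 12).
assert (Hu : 0 < u) by (unfold u; assert (0 < h ^ 2) by (apply pow2_gt_0; auto); lra).
assert (H := incr_strict (fun u => - (exp (u + u ^ 2 / 10) * (1 - u)))
  (fun u => - (exp (u + u ^ 2 / 10) * (- 4 * u / 5 - u ^ 2 / 5))) 0).
assert (H0 : - (exp (0 + 0 ^ 2 / 10) * (1 - 0)) = -1).
{ replace (0 + 0 ^ 2 / 10) with 0 by field. rewrite exp_0. ring. }
assert (Hr : - 1 < - (exp (u + u ^ 2 / 10) * (1 - u))).
{ rewrite <- H0 at 1. apply H; try lra.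
  - intros; auto_derive; auto. exp_unify. field.
  - intros z Hz. assert (0 < exp (z + z ^ 2 / 10)) by apply exp_pos. assert (0 < z ^ 2) by (apply pow_lt; auto).
    assert (0 < exp (z + z ^ 2 / 10) * (4 * z / 5 + z ^ 2 / 5)) by (apply Rmult_lt_0_compat; lra).
    lra. }
replace (- h ^ 2 / 12 - h ^ 4 / 1440) with (- (u + u ^ 2 / 10)) by (unfold u; field).
rewrite exp_Ropp.
assert (HE := exp_pos (u + u ^ 2 / 10)).
apply Rmult_lt_reg_l with (exp (u + u ^ 2 / 10)); auto.
rewrite Rinv_r by lra. lra.
Qed.

Lemma cN_pos : 0 < cN.
Proof. unfold cN. apply Rinv_0_lt_compat, sqrt_lt_R0. generalize PI_RGT_0; lra. Qed.

Lemma Phi_diff a y : Phi (y + a) - Phi (y - a) = cN * EE a y.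
Proof. rewrite !Phi_eq. unfold EE. ring. Qed.

Lemma ratio_EE h x y : 0 < h -> Phi_ratio h x y = EE (h / 2) y / EE (h / 2) x.
Proof.
intros Hh. unfold Phi_ratio. rewrite !Phi_diff.
assert (H := EE_pos (h / 2) x ltac:(lra)). assert (Hc := cN_pos).
field. lra.
Qed.

Lemma beta_eq h : 0 < h -> beta_const h = betaW (h / 2).
Proof.
intros Hh. unfold beta_const, betaW. rewrite Phi_eq.
assert (HW := W_pos (h / 2) ltac:(lra)).
assert (Hs : 0 < sqrt (2 * PI)) by (apply sqrt_lt_R0; generalize PI_RGT_0; lra).
replace (exp (- h ^ 2 / 8)) with (w (h / 2)) by (unfold w; f_equal; field).
unfold cN. field. lra.
Qed.

Lemma main_pos h : 0 < h ->
  (forall x y : R, Rabs x < Rabs y ->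
      exp (- 1 * ((y ^ 2 - x ^ 2) / 2)) < Phi_ratio h x y /\
      Phi_ratio h x y < exp (- beta_const h * ((y ^ 2 - x ^ 2) / 2))) /\
  (forall a : R, a < 1 -> exists x y : R, Rabs x < Rabs y /\
      ~ (exp (- a * ((y ^ 2 - x ^ 2) / 2)) < Phi_ratio h x y)) /\
  (forall b : R, beta_const h < b -> exists x y : R, Rabs x < Rabs y /\
      ~ (Phi_ratio h x y < exp (- b * ((y ^ 2 - x ^ 2) / 2)))) /\
  exp (- h ^ 2 / 12 - h ^ 4 / 1440) < beta_const h /\
  1 - h ^ 2 / 12 < exp (- h ^ 2 / 12 - h ^ 4 / 1440).
Proof.
intros Hh.
assert (Ha : 0 < h / 2) by lra.
rewrite beta_eq by auto.
split; [|split; [|split; [|split]]].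
- intros x y Hxy. rewrite ratio_EE by auto. split.
  apply left_ineq; auto. apply right_ineq; auto.
- intros al Hal. destruct (alpha_opt (h / 2) al Ha Hal) as [y [Hy1 Hy2]].
  exists 0, y. rewrite ratio_EE by auto. auto.
- intros b Hb. destruct (beta_opt (h / 2) b Ha Hb) as [y [Hy1 Hy2]].
  exists 0, y. rewrite ratio_EE by auto. auto.
- replace h with (2 * (h / 2)) at 1 2 by field. apply beta_lower; auto.
- apply elem_ineq. lra.
Qed.

Lemma Phi_neg z : Phi (- z) = 1 - Phi z.
Proof. rewrite !Phi_eq, P_odd. field. Qed.

Lemma ratio_neg h x y : Phi_ratio (- h) x y = Phi_ratio h x y.
Proof.
unfold Phi_ratio.
replace (y + - h / 2) with (y - h / 2) by field. replace (y - - h / 2) with (y + h / 2) by field.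
replace (x + - h / 2) with (x - h / 2) by field. replace (x - - h / 2) with (x + h / 2) by field.
destruct (Req_dec (Phi (x + h / 2) - Phi (x - h / 2)) 0) as [E|E].
- replace (Phi (x - h / 2) - Phi (x + h / 2)) with 0 by lra. rewrite E. unfold Rdiv. rewrite Rinv_0. ring.
- field. split; lra.
Qed.

Lemma beta_neg h : beta_const (- h) = beta_const h.
Proof.
unfold beta_const. replace (- h / 2) with (- (h / 2)) by field. rewrite Phi_neg.
replace ((- h) ^ 2) with (h ^ 2) by ring.
destruct (Req_dec (Phi (h / 2) - 1 / 2) 0) as [E|E].
- replace (1 - Phi (h / 2) - 1 / 2) with 0 by lra. rewrite E. rewrite !Rmult_0_r. unfold Rdiv. rewrite Rinv_0. ring.
- assert (0 < sqrt (2 * PI)) by (apply sqrt_lt_R0; generalize PI_RGT_0; lra).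
  field. split; lra.
Qed.

Theorem lemma3p3 (h : R) (hh : h <> 0) :
  let alpha := 1 in
  let beta := beta_const h in
  (forall x y : R, Rabs x < Rabs y ->
      exp (- alpha * ((y ^ 2 - x ^ 2) / 2)) < Phi_ratio h x y /\
      Phi_ratio h x y < exp (- beta * ((y ^ 2 - x ^ 2) / 2))) /\
  (forall a : R, a < alpha -> exists x y : R, Rabs x < Rabs y /\
      ~ (exp (- a * ((y ^ 2 - x ^ 2) / 2)) < Phi_ratio h x y)) /\
  (forall b : R, beta < b -> exists x y : R, Rabs x < Rabs y /\
      ~ (Phi_ratio h x y < exp (- b * ((y ^ 2 - x ^ 2) / 2)))) /\
  exp (- h ^ 2 / 12 - h ^ 4 / 1440) < beta /\
  1 - h ^ 2 / 12 < exp (- h ^ 2 / 12 - h ^ 4 / 1440).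
Proof.
intros alpha beta. subst alpha beta.
destruct (Rtotal_order h 0) as [Hn|[E|Hp]].
- assert (Hm := main_pos (- h) ltac:(lra)).
  rewrite beta_neg in Hm.
  replace ((- h) ^ 2) with (h ^ 2) in Hm by ring. replace ((- h) ^ 4) with (h ^ 4) in Hm by ring.
  setoid_rewrite ratio_neg in Hm. exact Hm.
- contradiction.
- apply main_pos; auto.
Qed.
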